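(* Let $X$ be a finite multiset of nonzero real numbers and let $T_{\min}$ be an addition tree over $X$ of minimum cost. Let $z$ be an internal node of $T_{\min}$ that is not the root, with children $z_1$ and $z_2$, sibling $u$, and parent $r$ (identifying each node with its value). (1) If $z>0$, $z_1\ge 0$ and $z_2>0$, then $u\ge 0$ or $r<0$. (2) If $z<0$, $z_1\le 0$ and $z_2<0$, then $u\le 0$ or $r>0$.
   Context: An addition tree over a multiset $X=\{x_1,\dots,x_n\}$ is a full binary tree with $n$ leaves labeled by the elements of $X$ (each element used exactly once), where every internal node has as its value the sum of the values of its two children. If $I_1,\dots,I_{n-1}$ are the values of the internal nodes of $T$, the cost of $T$ is $C(T)=\sum_{i=1}^{n-1}|I_i|$. $T_{\min}$ denotes an addition tree over $X$ minimizing $C$. *)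

(* Defs.v *)
From mathcomp Require Import all_boot all_order all_algebra.
Set Implicit Arguments. Unset Strict Implicit. Unset Printing Implicit Defensive.
Import Order.TTheory GRing.Theory Num.Theory.
Local Open Scope ring_scope.

Inductive atree (R : Type) : Type :=
| Leaf of R
| Node of atree R & atree R.
Arguments Leaf {R}.
Arguments Node {R}.

Section AdditionTrees.
Variable R : realFieldType.

Fixpoint value (t : atree R) : R :=
  match t with
  | Leaf x => x
  | Node l r => value l + value r
  end.

Fixpoint leaves (t : atree R) : seq R :=
  match t with
  | Leaf x => [:: x]
  | Node l r => leaves l ++ leaves r
  end.

Fixpoint cost (t : atree R) : R :=
  match t with
  | Leaf _ => 0
  | Node l r => `|value l + value r| + cost l + cost r
  end.

Definition addition_tree_over (X : seq R) (t : atree R) : Prop :=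
  perm_eq (leaves t) X.

Definition is_Tmin (X : seq R) (t : atree R) : Prop :=
  addition_tree_over X t /\
  forall t', addition_tree_over X t' -> cost t <= cost t'.

Fixpoint subtree (s t : atree R) : Prop :=
  s = t \/ match t with
           | Leaf _ => False
           | Node l r => subtree s l \/ subtree s r
           end.

(* In t there is a (non-root) internal node z whose two children are the
   subtrees z1 and z2 (in either order) and whose sibling is the subtree u
   (on either side); its parent is then the node Node z u or Node u z. *)
Definition node_config (t z1 z2 u : atree R) : Prop :=
  exists z, (z = Node z1 z2 \/ z = Node z2 z1) /\
            (subtree (Node z u) t \/ subtree (Node u z) t).

End AdditionTrees.

(* Main.v *)
Require Import Defs.
From mathcomp Require Import all_boot all_order all_algebra.
From mathcomp Require Import zify ring lra.
Import Order.TTheory GRing.Theory Num.Theory.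
Local Open Scope ring_scope.

Lemma replace_sub (R : realFieldType) (s t : atree R) :
  subtree s t -> forall s', value s' = value s -> perm_eq (leaves s') (leaves s) ->
  exists t', perm_eq (leaves t') (leaves t) /\ value t' = value t /\
             cost t' = cost t - cost s + cost s'.
Proof.
elim: t => [x|l IHl r IHr] /= Hs s' Hv Hp.
  case: Hs => // Es; subst s; exists s'; split => //; split => //; by rewrite /= subr0 add0r.
case: Hs => [Es|[H|H]].
- subst s; exists s'; split => //; split => //=; ring.
- have [l' [Pl [Vl Cl]]] := IHl H s' Hv Hp.
  exists (Node l' r) => /=; split; first by rewrite perm_cat2r.
  rewrite Vl Cl; split => //; ring.
- have [r' [Pr [Vr Cr]]] := IHr H s' Hv Hp.
  exists (Node l r') => /=; split; first by rewrite perm_cat2l.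
  rewrite Vr Cr; split => //; ring.
Qed.

Lemma key (R : realFieldType) (X : seq R) (Tmin : atree R) s s' :
  is_Tmin X Tmin -> subtree s Tmin -> value s' = value s ->
  perm_eq (leaves s') (leaves s) -> cost s' < cost s -> False.
Proof.
move=> [HT Hmin] Hs Hv Hp Hc.
have [t' [P [_ C]]] := @replace_sub R s Tmin Hs s' Hv Hp.
have : cost Tmin <= cost t'.
  apply: Hmin; rewrite /addition_tree_over.
  exact: perm_trans P HT.
rewrite C; lra.
Qed.

Theorem lemma2p1 (R : realFieldType) (X : seq R) (Tmin : atree R) :
  (forall x, x \in X -> x != 0) ->
  is_Tmin X Tmin ->
  forall z1 z2 u : atree R,
    node_config Tmin z1 z2 u ->
    let z := value z1 + value z2 in
    let r := z + value u in
    ((0 < z /\ 0 <= value z1 /\ 0 < value z2) -> (0 <= value u \/ r < 0)) /\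
    ((z < 0 /\ value z1 <= 0 /\ value z2 < 0) -> (value u <= 0 \/ 0 < r)).
Proof.
move=> _ HT z1 z2 u [zz [Hz Hsub]] z r.
set s' := Node (Node z2 u) z1.
have main : forall s, s = Node zz u \/ s = Node u zz -> subtree s Tmin ->
    `|value z2 + value u| < `|value z1 + value z2| -> False.
  move=> s Hs Hst Hlt.
  apply: (@key R X Tmin s s' HT Hst).
  - case: Hs => ->; case: Hz => -> /=; ring.
  - apply/permP => p.
    case: Hs => ->; case: Hz => -> /=; rewrite !count_cat; lia.
  - have e1 : value z2 + value z1 = value z1 + value z2 by rewrite addrC.
    have e2 : value u + (value z1 + value z2) = value z1 + value z2 + value u by rewrite addrC.
    have e3 : value z2 + value u + value z1 = value z1 + value z2 + value u by ring.
    move: Hlt.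
    case: Hs => ->; case: Hz => -> /=; rewrite ?e1 ?e2 e3; lra.
have Hsub' : exists s, (s = Node zz u \/ s = Node u zz) /\ subtree s Tmin.
  by case: Hsub => H; [exists (Node zz u) | exists (Node u zz)]; split => //; [left|right].
have [s [Hs Hst]] := Hsub'.
split.
- move=> [Hzp [H1 H2]]; case: (lerP 0 (value u)) => Hu; first by left.
  case: (ltrP r 0) => Hr; first by right.
  exfalso; apply: (main s Hs Hst).
  rewrite (gtr0_norm Hzp).
  case: (lerP 0 (value z2 + value u)) => h.
    rewrite ger0_norm //; rewrite /z; lra.
  rewrite ltr0_norm //; rewrite /r /z in Hr; rewrite /z; lra.
- move=> [Hzp [H1 H2]]; case: (lerP (value u) 0) => Hu; first by left.
  case: (ltrP 0 r) => Hr; first by right.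
  exfalso; apply: (main s Hs Hst).
  rewrite (ltr0_norm Hzp).
  case: (lerP 0 (value z2 + value u)) => h.
    rewrite ger0_norm //; rewrite /r /z in Hr; rewrite /z; lra.
  rewrite ltr0_norm //; rewrite /z; lra.
Qed.
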